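(* Let $q$ be a power of $2$ and $n\ge1$ an integer with $\gcd(n+1,q)=1$. If $q>n/2$, then there exists $a\in\mathbb{F}_q$ such that $C_n(a)$ is LCD.
   Context: For $a\in\mathbb{F}_q$ and $n \ge 1$, $T_n(a)$ denotes the $n\times n$ symmetric tridiagonal Toeplitz matrix over $\mathbb{F}_q$ with all diagonal entries equal to $a$, all entries on the first super- and sub-diagonals equal to $1$, and all other entries $0$. $C_n(a)$ is the $[2n,n]$ linear code over $\mathbb{F}_q$ with generator matrix $[I_n \mid T_n(a)]$. A linear code $C$ is LCD if $C\cap C^\perp=\{0\}$ (Euclidean dual). *)

(* Defs.v *)
From mathcomp Require Import all_boot all_order all_algebra all_field.
Set Implicit Arguments. Unset Strict Implicit. Unset Printing Implicit Defensive.
Import GRing.Theory.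
Local Open Scope ring_scope.

Definition tridiag (F : fieldType) (n : nat) (a : F) : 'M[F]_n :=
  \matrix_(i < n, j < n)
    if i == j then a
    else if ((i.+1 == j :> nat) || (j.+1 == i :> nat))%N then 1 else 0.

(* Generator matrix [I_n | T_n(a)] of the [2n, n] code C_n(a). *)
Definition genC (F : fieldType) (n : nat) (a : F) : 'M[F]_(n, n + n) :=
  row_mx 1%:M (tridiag n a).

Definition in_code (F : fieldType) (k m : nat) (G : 'M[F]_(k, m)) (x : 'rV[F]_m) : Prop :=
  (x <= G)%MS.

Definition in_dual (F : fieldType) (k m : nat) (G : 'M[F]_(k, m)) (x : 'rV[F]_m) : Prop :=
  forall c : 'rV[F]_m, in_code G c -> x *m c^T = 0.

Definition is_LCD (F : fieldType) (k m : nat) (G : 'M[F]_(k, m)) : Prop :=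
  forall x : 'rV[F]_m, in_code G x -> in_dual G x -> x = 0.

(* Main.v *)
Require Import Defs.
From mathcomp Require Import all_boot all_order all_algebra all_field.
From mathcomp Require Import ring zify.
Import GRing.Theory.
Open Scope ring_scope.

Section Poly.
Variable F : fieldType.

Fixpoint EP (k : nat) : {poly F} :=
  match k with
  | 0 => 0
  | 1 => 1
  | (k'.+1 as k1).+1 => EP k1 * 'X - EP k'
  end.

Lemma EP_SS k : EP k.+2 = EP k.+1 * 'X - EP k.
Proof. by []. Qed.

Lemma EP_size k : size (EP k) = k /\ size (EP k.+1) = k.+1 /\ lead_coef (EP k.+1) = 1.
Proof.
elim: k => [|k [IH1 [IH2 IH3]]].
  by rewrite /= size_poly0 size_poly1 lead_coef1.
have nz : EP k.+1 != 0 by rewrite -size_poly_eq0 IH2.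
have sX : size (EP k.+1 * 'X) = k.+2 by rewrite size_mulX // IH2.
split=> //; rewrite EP_SS; split.
  by rewrite size_addl sX // size_opp IH1.
by rewrite lead_coefDl ?lead_coefMX // sX size_opp IH1.
Qed.

Definition E (c : F) k := (EP k).[c].

Lemma E0 c : E c 0 = 0. Proof. by rewrite /E /= horner0. Qed.
Lemma E1 c : E c 1 = 1. Proof. by rewrite /E /= hornerC. Qed.
Lemma ESS c k : E c k.+2 = E c k.+1 * c - E c k.
Proof. by rewrite /E EP_SS hornerD hornerN hornerMX. Qed.

Lemma E_add c m n : E c (m + n).+1 = E c m.+1 * E c n.+1 - E c m * E c n.
Proof.
elim: n m => [|n IH] m.
  by rewrite addn0 E1 E0 mulr1 mulr0 subr0.
rewrite addnS -addSn IH !ESS; ring.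
Qed.

Lemma E_double c k : E c (k + k).+1 = (E c k.+1 - E c k) * (E c k.+1 + E c k).
Proof. rewrite E_add; ring. Qed.


Lemma delta_sum n (f : nat -> F) k :
  \sum_(i < n) f i * (i == k :> nat)%:R = if (k < n)%N then f k else 0.
Proof.
rewrite -(big_mkord xpredT (fun i => f i * (i == k)%:R)).
elim: n => [|n IH]; first by rewrite big_geq.
rewrite big_nat_recr //= IH.
case: (ltngtP k n) => [lt|gt|->].
- by rewrite mulr0 addr0 ltnS (ltnW lt).
- by rewrite mulr0 addr0 ltnS leqNgt gt.
- by rewrite mulr1 add0r ltnSn.
Qed.

Lemma tridiag_entry n (b : F) (i j : 'I_n) :
  (if i == j then b
    else if ((i.+1 == j :> nat) || (j.+1 == i :> nat))%N then 1 else 0)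
  = b * (i == j :> nat)%:R + (i.+1 == j :> nat)%:R + (i == j.+1 :> nat)%:R.
Proof.
case: i j => [i Hi] [j Hj] /=.
rewrite -val_eqE /=.
case: (ltngtP i j) => [lt|gt|->].
- have h1 : (j.+1 == i) = false by apply/negbTE/eqP; lia.
  have h2 : (i == j.+1) = false by apply/negbTE/eqP; lia.
  by rewrite h1 h2 orbF mulr0 add0r addr0; case: (i.+1 == j).
- have h1 : (i.+1 == j) = false by apply/negbTE/eqP; lia.
  by rewrite h1 /= mulr0 !add0r eq_sym; case: (i == j.+1).
- have h1 : (j.+1 == j) = false by apply/negbTE/eqP; lia.
  by rewrite h1 eq_sym h1 mulr1 !addr0.
Qed.

Lemma tridiag_ker n (b : F) (v : 'rV[F]_n) :
  v *m tridiag n b = 0 -> E (-b) n.+1 != 0 -> v = 0.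
Proof.
case: n v => [|n] v Hv HE; first by apply/rowP => [[]].
pose u k := if (0 < k <= n.+1)%N then v 0 (inord k.-1) else 0.
have hu : forall i : 'I_n.+1, u i.+1 = v 0 i.
  by move=> i; rewrite /u /= ltn_ord inord_val.
have u0 : u 0%N = 0 by [].
have un : u n.+2 = 0 by rewrite /u ltnn andbF.
have col : forall j : 'I_n.+1, u j + b * u j.+1 + u j.+2 = 0.
  move=> j; have := congr1 (fun M : 'M[F]_(1,n.+1) => M 0 j) Hv; rewrite !mxE => <-.
  under eq_bigr => i _ do rewrite mxE tridiag_entry -hu !mulrDr.
  rewrite !big_split /=.
  have d1 := delta_sum n.+1 (fun i => u i.+1); simpl in d1.
  under eq_bigr => i _ do rewrite mulrCA.
  rewrite -mulr_sumr d1 ltn_ord d1.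
  case: j => [[|j] Hj] /=.
    rewrite big1 ?u0 ?add0r; last by move=> i _; rewrite mulr0.
    rewrite addr0; case: ltnP => // le.
    have e : n = 0%N by lia.
    by move: un; rewrite e => ->.
  rewrite (eq_bigr (fun i : 'I_n.+1 => u i.+1 * (i == j :> nat)%:R)); last first.
    by move=> i _; rewrite eqSS.
  rewrite d1 (ltnW Hj).
  case: ltnP => [_|le]; first by ring.
  have e : j.+3 = n.+2 by lia.
  by rewrite e un; ring.
have rec : forall k, (k <= n.+1)%N -> u k = u 1%N * E (-b) k /\ u k.+1 = u 1%N * E (-b) k.+1.
  elim => [|k IH] hk; first by rewrite E0 E1 mulr0 mulr1.
  have [IH1 IH2] := IH (ltnW hk).
  split => //.
  have := col (Ordinal hk); rewrite /= ESS => h.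
  have -> : u k.+2 = - u k - b * u k.+1.
    by apply: (addrI (u k + b * u k.+1)); rewrite h; ring.
  rewrite IH1 IH2; ring.
have [_ h] := rec n.+1 (leqnn _).
move: h; rewrite un => /esym/eqP; rewrite mulf_eq0 (negbTE HE) orbF => /eqP h1.
apply/rowP => i; rewrite mxE -hu.
have [-> _] := rec i.+1 (ltn_ord i).
by rewrite h1 mul0r.
Qed.

Lemma tridiag_sym n (a : F) : (tridiag n a)^T = tridiag n a.
Proof.
apply/matrixP => i j; rewrite !mxE eq_sym.
by rewrite orbC.
Qed.

Lemma lcd_of n (a b : F) :
  (forall x : F, x + x = 0) -> b = a + 1 -> E (-b) n.+1 != 0 ->
  is_LCD (genC n a).
Proof.
move=> two0 hb HE x /submxP [y ->] Hd.
set G := genC n a.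
have h1 : y *m G *m G^T = 0.
  apply/matrixP => i j; rewrite (ord1 i).
  have := Hd (row j G) (row_sub j G) => /(congr1 (fun M : 'M[F]_1 => M 0 0)).
  rewrite [RHS]mxE => H. rewrite [RHS]mxE -H !mxE.
  by apply: eq_bigr => k _; rewrite !mxE.
set T := tridiag n a.
set S := tridiag n b.
have hS : S = 1%:M + T.
  apply/matrixP => i j; rewrite !mxE hb.
  case: (i == j) => /=; first by rewrite addrC.
  by rewrite add0r.
have hTT : T + T = 0 by apply/matrixP => i j; rewrite !mxE two0.
have hG : G *m G^T = S *m S.
  rewrite /G /genC tr_row_mx mul_row_col trmx1 mul1mx tridiag_sym -/T.
  rewrite hS mulmxDl mulmxDr mulmxDr mul1mx mulmx1 mul1mx.
  by rewrite addrA -(addrA _ T T) hTT addr0.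
move: h1; rewrite -mulmxA hG mulmxA => /tridiag_ker /(_ HE) /tridiag_ker /(_ HE) ->.
by rewrite mul0mx.
Qed.

End Poly.

Theorem corollary2p1 (F : finFieldType) (q n : nat) :
  (exists k : nat, q = (2 ^ k)%N) ->
  #|F| = q ->
  (1 <= n)%N ->
  coprime n.+1 q ->
  (n < 2 * q)%N ->
  exists a : F, is_LCD (genC n a).
Proof.
move=> [k hq] hF hn hcop hlt.
have c2 : 2%N \in [pchar F] by apply: (@card_finPcharP F 2 k); rewrite ?hF.
have two0 : forall x : F, x + x = 0 by move=> x; rewrite -mulr2n (mulrn_pchar c2).
have k0 : (0 < k)%N.
  case: k hq => // hq; have := finNzRing_gt1 F; rewrite hF hq //.
have hodd : ~~ odd n.
  move: hcop; rewrite hq coprime_pexpr // coprimen2 /=; by case: (odd n).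
set m := n./2.
have hnm : n = (m + m)%N.
  by have := odd_double_half n; rewrite (negbTE hodd) add0n -addnn => ->.
have hmq : (m < q)%N by lia.
set P : {poly F} := EP F m.+1 + EP F m.
have [s1 [s2 _]] := EP_size F m.
have sP : size P = m.+1 by rewrite /P size_addl s2 // s1.
have Pnz : P != 0 by rewrite -size_poly_eq0 sP.
have [c Hc] : exists c, ~~ root P c.
  case: (boolP (all (root P) (enum F))) => [Hall|/allPn [c _ Hc]]; last by exists c.
  have := max_poly_roots Pnz Hall (enum_uniq F).
  by rewrite -cardE hF sP ltnS leqNgt hmq.
have negx : forall x : F, - x = x.
  by move=> x; apply: (addrI x); rewrite two0 subrr.
exists (- c - 1).
apply: (@lcd_of _ n _ (- c) two0); first by rewrite subrK.
rewrite opprK hnm E_double.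
have -> : E F c m.+1 - E F c m = E F c m.+1 + E F c m by rewrite negx.
by rewrite mulf_neq0 // -hornerD.
Qed.
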